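(* Let $Z\subset\mathbb{P}^n$ be a finite set and let $k$ be its Kruskal rank. If $\ell(Z)\le 2k-1$, then $Z$ is separated by forms of degree $2$, i.e. for every $P\in Z$ there is a homogeneous form of degree $2$ vanishing at every point of $Z\setminus\{P\}$ and not vanishing at $P$. Hence $\nu_2(Z)$ is linearly independent.
   Context: All spaces are complex projective. $\ell(Z)$ is the cardinality of $Z$. A finite set is linearly independent if representative vectors of its points are linearly independent. The Kruskal rank of $Z$ is the largest integer $k$ such that every subset of $Z$ of cardinality at most $k$ is linearly independent. $\nu_2:\mathbb{P}^n\to\mathbb{P}(Sym^2(\mathbb{C}^{n+1}))$ is the Veronese map $[L]\mapsto[L^2]$, $L$ a linear form. *)

(* Defs.v *)
From mathcomp Require Import all_boot all_algebra.
From mathcomp Require Import Rstruct.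
From mathcomp.real_closed Require Import complex.
From mathcomp.multinomials Require Export mpoly.

Set Implicit Arguments.
Unset Strict Implicit.
Unset Printing Implicit Defensive.
Import GRing.Theory.
Local Open Scope ring_scope.

Definition CC : numClosedFieldType := complex Rdefinitions.R.

(* A finite set Z = {P_0, ..., P_(m-1)} of P^n is given by representative
   vectors v i : 'rV[CC]_(n.+1), nonzero and pairwise non-proportional
   (so the points are pairwise distinct, and ell(Z) = m). *)
Definition proj_point_set (N m : nat) (v : 'I_m -> 'rV[CC]_N) : Prop :=
  (forall i, v i != 0) /\
  (forall i j, i != j -> ~ exists a : CC, v i = a *: v j).

Definition rows_of (F : fieldType) (N m : nat) (v : 'I_m -> 'rV[F]_N)
  (S : {set 'I_m}) : 'M[F]_(#|S|, N) :=
  \matrix_(i < #|S|) v (enum_val i).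

Definition lin_indep (F : fieldType) (N m : nat) (v : 'I_m -> 'rV[F]_N)
  (S : {set 'I_m}) : bool :=
  row_free (rows_of v S).

(* Kruskal rank: the largest k such that every subset of cardinality at most k
   is linearly independent (capped at ell(Z) = m, since larger k impose no
   further condition). *)
Definition kruskal_rank (F : fieldType) (N m : nat) (v : 'I_m -> 'rV[F]_N) : nat :=
  \max_(k < m.+1 | [forall S : {set 'I_m}, (#|S| <= k)%N ==> lin_indep v S]) k.

Definition eval_at (F : fieldType) (N : nat) (p : {mpoly F[N]}) (x : 'rV[F]_N) : F :=
  p.@[fun j => x 0 j].

(* Veronese map nu_2 : [L] |-> [L^2], L^2 viewed in Sym^2(C^N) ⊂ C^N ⊗ C^N
   as the (flattened) symmetric matrix L^T L. *)
Definition veronese2 (F : fieldType) (N : nat) (x : 'rV[F]_N) : 'rV[F]_(N * N) :=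
  mxvec (x^T *m x).

Definition veronese2_set (F : fieldType) (N m : nat) (v : 'I_m -> 'rV[F]_N) :
  'I_m -> 'rV[F]_(N * N) := fun i => veronese2 (v i).

(* Main.v *)
Require Import Defs.
From mathcomp Require Import all_boot all_algebra.
From mathcomp.multinomials Require Import mpoly.
From mathcomp Require Import zify.
Import GRing.Theory.
Local Open Scope ring_scope.

Lemma sep_lin (N m : nat) (v : 'I_m -> 'rV[CC]_N) (S : {set 'I_m}) P :
  lin_indep v S -> P \in S -> exists a : 'cV[CC]_N,
  (v P *m a) 0 0 != 0 /\ forall Q, Q \in S -> Q != P -> (v Q *m a) 0 0 = 0.
Proof.
move=> /row_freeP [B HB] PS.
set iP := enum_rank_in PS P.
have key: forall Q, Q \in S -> (v Q *m col iP B) 0 0 = (enum_rank_in PS Q == iP)%:R.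
  move=> Q QS.
  have <- : (rows_of v S *m B) (enum_rank_in PS Q) iP = (enum_rank_in PS Q == iP)%:R.
    by rewrite HB mxE.
  rewrite !mxE; apply: eq_bigr => l _; rewrite !mxE enum_rankK_in //.
exists (col iP B); split; first by rewrite key // eqxx oner_eq0.
move=> Q QS QP; rewrite key //; case: eqP => // /(enum_rank_in_inj QS PS) E.
by rewrite E eqxx in QP.
Qed.

Lemma sub_card (T : finType) (A : {set T}) j : (j <= #|A|)%N ->
  exists B : {set T}, B \subset A /\ #|B| = j.
Proof.
elim: j => [|j IH] hj; first by exists set0; rewrite sub0set cards0.
have [B [BA cB]] := IH (ltnW hj).
have: ~~ (A \subset B).
  apply/negP=> AB; have := subset_leq_card AB; rewrite cB; lia.
case/subsetPn => x xA xB.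
exists (x |: B); rewrite cardsU1 xB cB; split => //.
by rewrite subUset sub1set xA.
Qed.

Lemma kr_prop N m (v : 'I_m -> 'rV[CC]_N) : (0 < kruskal_rank v)%N ->
  forall S : {set 'I_m}, (#|S| <= kruskal_rank v)%N -> lin_indep v S.
Proof.
rewrite /kruskal_rank.
case: (pickP (fun k : 'I_m.+1 => [forall S : {set 'I_m}, (#|S| <= k)%N ==> lin_indep v S])) => [i0 Pi0|none].
  rewrite (bigmax_eq_arg i0 Pi0); case: arg_maxnP => //= i Pi _ _ S HS.
  by move/forallP: Pi => /(_ S) /implyP; apply.
by rewrite big_pred0.
Qed.

Lemma cover m k (P : 'I_m) : (m.+1 <= 2 * k)%N -> exists S1 S2 : {set 'I_m},
  [/\ P \in S1, P \in S2, (#|S1| <= k)%N, (#|S2| <= k)%N & forall Q, Q \in S1 \/ Q \in S2].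
Proof.
move=> hk.
have cT : #|[set~ P]| = m.-1 by rewrite cardsC1 card_ord.
have hj : (minn k.-1 m.-1 <= #|[set~ P]|)%N by rewrite cT geq_minr.
have [A [AT cA]] := sub_card _ _ _ hj.
exists (P |: A), (P |: ([set~ P] :\: A)); split.
- by rewrite setU11.
- by rewrite setU11.
- by rewrite cardsU1 cA; case: (P \in A); lia.
- rewrite cardsU1 cardsD (setIidPr AT) cT cA; case: (_ \in _); lia.
move=> Q; case: (eqVneq Q P) => [->|QP]; first by left; rewrite setU11.
case QA: (Q \in A); first by left; rewrite setU1r.
by right; rewrite setU1r // inE QA !inE QP.
Qed.

Definition lf {N} (a : 'cV[CC]_N) : {mpoly CC[N]} := \sum_(j < N) a j 0 *: 'X_j.

Lemma lf_homog N (a : 'cV[CC]_N) : lf a \is 1.-homog.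
Proof.
apply: rpred_sum => j _; apply: rpredZ.
rewrite dhomogX; apply/eqP; exact: mdeg1.
Qed.

Lemma lf_eval N (a : 'cV[CC]_N) x : eval_at (lf a) x = (x *m a) 0 0.
Proof.
rewrite /eval_at /lf raddf_sum mxE; apply: eq_bigr => j _.
by rewrite /= mevalZ mevalXU mulrC.
Qed.

Lemma eval_atM N (p q : {mpoly CC[N]}) x : eval_at (p * q) x = eval_at p x * eval_at q x.
Proof. exact: mevalM. Qed.

Theorem mainTheorem2 (n m : nat) (v : 'I_m -> 'rV[CC]_(n.+1)) :
  proj_point_set v ->
  (m.+1 <= 2 * kruskal_rank v)%N ->
  (forall P : 'I_m, exists q : {mpoly CC[n.+1]},
      q \is 2.-homog /\
      (forall Q : 'I_m, Q != P -> eval_at q (v Q) = 0) /\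
      eval_at q (v P) != 0) /\
  lin_indep (veronese2_set v) [set: 'I_m].
Proof.
move=> _ hm.
have k0 : (0 < kruskal_rank v)%N by lia.
have HS := kr_prop _ _ _ k0.
have sepP : forall P, exists ab : 'cV[CC]_(n.+1) * 'cV[CC]_(n.+1),
  [/\ (v P *m ab.1) 0 0 != 0, (v P *m ab.2) 0 0 != 0 &
      forall Q, Q != P -> (v Q *m ab.1) 0 0 * (v Q *m ab.2) 0 0 = 0].
  move=> P; have [S1 [S2 [P1 P2 c1 c2 cov]]] := cover _ _ P hm.
  have [a [aP aQ]] := sep_lin _ _ _ _ _ (HS _ c1) P1.
  have [b [bP bQ]] := sep_lin _ _ _ _ _ (HS _ c2) P2.
  exists (a, b); split => // Q QP; case: (cov Q) => QS.
    by rewrite aQ ?mul0r.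
  by rewrite bQ ?mulr0.
have [f Hf] := fin_all_exists sepP.
split.
  move=> P; have [aP bP HQ] := Hf P.
  exists (lf (f P).1 * lf (f P).2); split.
    by rewrite -[2%N]/(1+1)%N; apply: dhomogM; apply: lf_homog.
  split; first by move=> Q QP; rewrite eval_atM !lf_eval HQ.
  by rewrite eval_atM !lf_eval mulf_neq0.
apply/row_freeP.
pose c P := (v P *m (f P).1) 0 0 * (v P *m (f P).2) 0 0.
pose M P := lin_mx (mulmx ((f P).1)^T) *m lin_mx (mulmxr (f P).2).
exists (\matrix_(l, i) ((M (enum_val i)) l (mxvec_index 0 0) / c (enum_val i))).
apply/matrixP => i j; rewrite !mxE.
transitivity ((veronese2 (v (enum_val i)) *m M (enum_val j)) 0 (mxvec_index 0 0)
   / c (enum_val j)).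
  rewrite mxE mulr_suml; apply: eq_bigr => l _; rewrite !mxE mulrA //.
rewrite /veronese2 /M mulmxA mul_vec_lin mul_vec_lin mxvecE /=.
rewrite mulmxA -trmx_mul -mulmxA mxE big_ord1 [_^T _ _]mxE.
have [aP bP HQ] := Hf (enum_val j).
case: (eqVneq i j) => [->|ij].
  by rewrite divff // mulf_neq0.
rewrite HQ ?mul0r //.
by apply: contra ij => /eqP /enum_val_inj ->.
Qed.
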